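(* Fix parameters (including $K\in\mathbb N$ and $\beta_{IA}\in(0,1]$) and a population size vector $\mathbf m$ as in the context, with Assumption (A). Then the problem $\min_{\mathbf y\in\mathcal Y}\overline{SC}(\mathbf y)$ has a unique solution $\mathbf y^\star(\mathbf m,K,\beta_{IA})$.
   Context: Let $D_{\max}\in\mathbb N$, $\mathcal D=\{1,\dots,D_{\max}\}$. A population size vector is $\mathbf m=(m_d)_{d\in\mathcal D}$ with $m_d>0$, $\sum_d m_d=1$. Parameters: $\tau_{DA}\in(0,1]$; $0\le L_P<L_U$; $0\le p_P^i<p_U^i\le1$; $\beta_{IA}\in(0,1]$; $K\in\mathbb N$; $c_P,c_I\ge0$; $\xi_{\rm cov}\in(0,1]$, $ded\ge0$. Let $\mathcal Y=\prod_{d\in\mathcal D}[0,m_d]$. For $\mathbf y\in\mathcal Y$ set $g_d=y_d/m_d$, $w_d=d\,m_d/\sum_{d'}d'm_{d'}$, $\gamma(\mathbf y)=\beta_{IA}\sum_d w_d(g_dp_P^i+(1-g_d)p_U^i)$, $\lambda(\mathbf y)=\beta_{IA}\sum_d w_d(d-1)(g_dp_P^i+(1-g_d)p_U^i)$, $e(\mathbf y)=\gamma(\mathbf y)\sum_{k=1}^K\lambda(\mathbf y)^{k-1}$, $C_{d,P}(\mathbf y)=\tau_{DA}(1+d\,e(\mathbf y))L_P+c_P$, $C_{d,N}(\mathbf y)=\tau_{DA}(1+d\,e(\mathbf y))L_U$, and the social cost $\overline{SC}(\mathbf y)=\sum_{d\in\mathcal D}\big(y_dC_{d,P}(\mathbf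 y)+(m_d-y_d)C_{d,N}(\mathbf y)\big)$ (here $y_d$ is the mass of degree-$d$ nodes that protect, the rest take no action). Assumption (A): $L_P<(1-\xi_{\rm cov})L_U$ and $c_P>c_I+ded$. *)

(* Defs.v *)
From HB Require Import structures.
From mathcomp Require Import all_boot all_order all_algebra.
From mathcomp Require Import reals.
Set Implicit Arguments. Unset Strict Implicit. Unset Printing Implicit Defensive.
Import Order.TTheory GRing.Theory Num.Theory.
Local Open Scope ring_scope.

Section SocialCost.
Variable R : realType.
Variable Dmax : nat.
(* degree index i : 'I_Dmax represents the degree d = i+1 in {1,...,Dmax} *)
Definition deg (i : 'I_Dmax) : R := (i.+1)%:R.

(* population size vector m; strategy vector y (mass of protecting nodes) *)
Variables (m : 'I_Dmax -> R).

Definition is_pop_size : Prop :=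
  (forall i, 0 < m i) /\ \sum_(i < Dmax) m i = 1.

Definition inY (y : 'I_Dmax -> R) : Prop :=
  forall i, 0 <= y i <= m i.

Definition gfrac (y : 'I_Dmax -> R) (i : 'I_Dmax) : R := y i / m i.

Definition wdeg (i : 'I_Dmax) : R :=
  deg i * m i / \sum_(j < Dmax) deg j * m j.

Variables (tauDA LP LU pP pU betaIA cP cI xicov ded : R) (K : nat).

Definition infp (y : 'I_Dmax -> R) (i : 'I_Dmax) : R :=
  gfrac y i * pP + (1 - gfrac y i) * pU.

Definition gammaf (y : 'I_Dmax -> R) : R :=
  betaIA * \sum_(i < Dmax) wdeg i * infp y i.

Definition lambdaf (y : 'I_Dmax -> R) : R :=
  betaIA * \sum_(i < Dmax) wdeg i * (deg i - 1) * infp y i.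

Definition ef (y : 'I_Dmax -> R) : R :=
  gammaf y * \sum_(k < K) lambdaf y ^+ k.

Definition CP (y : 'I_Dmax -> R) (i : 'I_Dmax) : R :=
  tauDA * (1 + deg i * ef y) * LP + cP.

Definition CN (y : 'I_Dmax -> R) (i : 'I_Dmax) : R :=
  tauDA * (1 + deg i * ef y) * LU.

Definition SC (y : 'I_Dmax -> R) : R :=
  \sum_(i < Dmax) (y i * CP y i + (m i - y i) * CN y i).

End SocialCost.

(* Main.v *)
Require Import Defs.
From HB Require Import structures.
From mathcomp Require Import all_boot all_order all_algebra.
From mathcomp Require Import reals.
From mathcomp Require Import all_classical all_analysis.
From mathcomp Require Import ring lra.
Import Order.TTheory GRing.Theory Num.Theory numFieldTopology.Exports numFieldNormedType.Exports.
Set Implicit Arguments. Unset Strict Implicit. Unset Printing Implicit Defensive.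
Local Open Scope ring_scope.

Section Lin.
Variable R : realType.
Variable n : nat.
Variable m : 'I_n -> R.

Definition lin (a b : 'I_n -> R) (y : 'I_n -> R) : R :=
  \sum_(i < n) (y i * a i + (m i - y i) * b i).

Definition mid (y1 y2 : 'I_n -> R) : 'I_n -> R := fun i => (y1 i + y2 i) / 2.

Lemma lin_mid a b y1 y2 : lin a b (mid y1 y2) = (lin a b y1 + lin a b y2) / 2.
Proof.
rewrite /lin /mid -big_split /= mulr_suml; apply: eq_bigr => i _; by field.
Qed.

Lemma lin_diff a b y1 y2 :
  lin a b y1 - lin a b y2 = \sum_(i < n) (y1 i - y2 i) * (a i - b i).
Proof. rewrite /lin -sumrB; apply: eq_bigr => i _; ring. Qed.

Lemma lin_ge0 a b y : inY m y -> (forall i, 0 <= a i) -> (forall i, 0 <= b i) ->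
  0 <= lin a b y.
Proof.
move=> hy ha hb; apply: sumr_ge0 => i _; have /andP[h1 h2] := hy i.
apply: addr_ge0; apply: mulr_ge0 => //; rewrite subr_ge0 //.
Qed.

Lemma lin_le a b y1 y2 : (forall i, a i <= b i) -> (forall i, y1 i <= y2 i) ->
  lin a b y2 <= lin a b y1.
Proof.
move=> hab hy; rewrite -subr_ge0 lin_diff; apply: sumr_ge0 => i _.
by apply: mulr_le0; rewrite subr_le0.
Qed.

Lemma lin_lt a b y1 y2 k : (forall i, a i < b i) -> (forall i, y1 i <= y2 i) ->
  y1 k < y2 k -> lin a b y2 < lin a b y1.
Proof.
move=> hab hy hk; rewrite -subr_gt0 lin_diff (bigD1 k) //=.
apply: ltr_wpDr.
  by apply: sumr_ge0 => i _; apply: mulr_le0; rewrite subr_le0 ?hy ?ltW.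
have := hab k; nra.
Qed.

Definition exch (y : 'I_n -> R) (i j : 'I_n) (e : R) : 'I_n -> R :=
  fun k => y k + e * ((k == j)%:R - (k == i)%:R).

Lemma sum_delta (c : 'I_n -> R) j : \sum_(k < n) (k == j)%:R * c k = c j.
Proof.
rewrite (bigD1 j) //= eqxx mul1r big1 ?addr0 // => k /negbTE ->; by rewrite mul0r.
Qed.

Lemma lin_exch a b y i j e :
  lin a b (exch y i j e) - lin a b y = e * ((a j - b j) - (a i - b i)).
Proof.
rewrite lin_diff /exch.
transitivity (\sum_(k < n) (e * ((k == j)%:R * (a k - b k)) - e * ((k == i)%:R * (a k - b k)))).
  by apply: eq_bigr => k _; ring.
rewrite sumrB -!mulr_sumr (sum_delta (fun k => a k - b k)) (sum_delta (fun k => a k - b k)).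
by ring.
Qed.

End Lin.

Section Cont.
Local Open Scope classical_set_scope.
Variable R : realType.
Variable n : nat.
Variable m : 'I_n -> R.

Lemma cvg_powk (g : 'rV[R]_n -> R) x k : g @ x --> g x -> (fun t => g t ^+ k) @ x --> g x ^+ k.
Proof.
move=> h; exact: (continuous_comp h (@exprn_continuous R k (g x))).
Qed.

Lemma cont_lin a b : continuous (fun v : 'rV[R]_n => lin m a b (fun i => v ord0 i)).
Proof.
rewrite /lin; apply: (@continuous_big _ _ +%R 0 xpredT add_continuous) => i _ v.
have c1 : (fun w : 'rV[R]_n => w ord0 i) @ v --> v ord0 i := @coord_continuous R 1 n ord0 i v.
refine (cvgD (cvgM c1 (cvg_cst _)) (cvgM (cvgD (cvg_cst _) (cvgN c1)) (cvg_cst _))).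
Qed.

End Cont.

Section Main.
Variable R : realType.
Variable n : nat.
Variable m : 'I_n -> R.
Variables (tau LP LU pP pU beta cP : R) (K : nat).
Hypothesis m_gt0 : forall i, 0 < m i.
Hypothesis tau_gt0 : 0 < tau.
Hypothesis LP_ge0 : 0 <= LP.
Hypothesis LPU : LP < LU.
Hypothesis pP_ge0 : 0 <= pP.
Hypothesis pPU : pP < pU.
Hypothesis beta_gt0 : 0 < beta.
Hypothesis K_gt0 : (0 < K)%N.

Definition S : R := \sum_(i < n) deg R i * m i.
Hypothesis S_gt0 : 0 < S.

Lemma dg_ge1 (i : 'I_n) : 1 <= deg R i.
Proof. by rewrite /deg ler1n. Qed.

Definition Gf := lin m (fun i => deg R i * pP) (fun i => deg R i * pU).
Definition Bf := lin m (fun i => deg R i * (deg R i - 1) * pP) (fun i => deg R i * (deg R i - 1) * pU).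
Definition Cf := lin m (fun i => deg R i * LP) (fun i => deg R i * LU).
Definition Lf := lin m (fun _ => tau * LP + cP) (fun _ => tau * LU).
Definition Qf (b : R) := \sum_(k < K) (beta * b / S) ^+ k.
Definition SCrep (y : 'I_n -> R) :=
  Lf y + tau * beta / S * (Gf y * Cf y) * Qf (Bf y).

Lemma SC_rep y : SC m tau LP LU pP pU beta cP K y = SCrep y.
Proof.
have Sn0 : S != 0 by rewrite gt_eqF.
have hg : gammaf m pP pU beta y = beta * Gf y / S.
  rewrite /gammaf /Gf /lin -mulrA mulr_suml; congr (_ * _); apply: eq_bigr => i _.
  rewrite /wdeg /infp /gfrac -/S.
  have := m_gt0 i; rewrite lt0r => /andP[mi0 _].
  by field; apply/andP.
have hl : lambdaf m pP pU beta y = beta * Bf y / S.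
  rewrite /lambdaf /Bf /lin -mulrA mulr_suml; congr (_ * _); apply: eq_bigr => i _.
  rewrite /wdeg /infp /gfrac -/S.
  have := m_gt0 i; rewrite lt0r => /andP[mi0 _].
  by field; apply/andP.
have he : ef m pP pU beta K y = beta * Gf y / S * Qf (Bf y).
  by rewrite /ef hg hl /Qf; congr (_ * _); apply: eq_bigr => k _; rewrite mulrA.
rewrite /SC /SCrep /CP /CN he /Lf /Cf /lin.
rewrite [X in _ + X](_ : _ = \sum_(i < n) (tau * beta / S * Gf y * Qf (Bf y)) *
   (y i * (deg R i * LP) + (m i - y i) * (deg R i * LU))); last by rewrite -mulr_sumr; ring.
by rewrite -big_split; apply: eq_bigr => i _ /=; ring.
Qed.


Lemma powmid (x y : R) k : 0 <= x -> 0 <= y ->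
  ((x + y) / 2) ^+ k <= (x ^+ k + y ^+ k) / 2.
Proof.
move=> hx hy; elim: k => [|k IH]; first by rewrite !expr0; lra.
have hxy : 0 <= (x ^+ k - y ^+ k) * (x - y).
  case: (lerP x y) => h.
    have := @lerXn2r _ k x y; rewrite !nnegrE => /(_ hx hy h) h2; nra.
  have := @lerXn2r _ k y x; rewrite !nnegrE => /(_ hy hx (ltW h)) h2; nra.
have h0 : 0 <= (x + y) / 2 by lra.
rewrite !exprS; apply: le_trans (ler_wpM2l h0 IH) _; nra.
Qed.

Lemma S_pos : 0 < S. Proof. exact: S_gt0. Qed.

Lemma Q_ge1 b : 0 <= b -> 1 <= Qf b.
Proof.
move=> hb; rewrite /Qf -(prednK K_gt0) big_ord_recl expr0 lerDl.
apply: sumr_ge0 => i _; apply: exprn_ge0; apply: divr_ge0; last exact: ltW.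
by apply: mulr_ge0 => //; exact: ltW.
Qed.

Lemma Q_mono b1 b2 : 0 <= b1 -> b1 <= b2 -> Qf b1 <= Qf b2.
Proof.
move=> h1 h2; rewrite /Qf; apply: ler_sum => k _; apply: lerXn2r; rewrite ?nnegrE.
- by apply: divr_ge0; [apply: mulr_ge0 => //; exact: ltW | exact: ltW].
- by apply: divr_ge0; [apply: mulr_ge0 => //; [exact: ltW | exact: le_trans h2] | exact: ltW].
- by rewrite ler_pM2r ?invr_gt0 // ler_pM2l.
Qed.

Lemma Q_mid b1 b2 : 0 <= b1 -> 0 <= b2 -> Qf ((b1 + b2) / 2) <= (Qf b1 + Qf b2) / 2.
Proof.
move=> h1 h2; rewrite /Qf -big_split mulr_suml /=; apply: ler_sum => k _.
have -> : beta * ((b1 + b2) / 2) / S = (beta * b1 / S + beta * b2 / S) / 2.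
  by field; rewrite gt_eqF.
by apply: powmid; (apply: divr_ge0; [apply: mulr_ge0 => //; exact: ltW | exact: ltW]).
Qed.

Lemma deg_gt0 (i : 'I_n) : 0 < deg R i.
Proof. by rewrite /deg ltr0n. Qed.

Lemma Gf_ge0 y : inY m y -> 0 <= Gf y.
Proof.
move=> hy; apply: lin_ge0 => // i; apply: mulr_ge0; (try exact: ltW (deg_gt0 i)); first [exact: pP_ge0 | exact: ltW (le_lt_trans pP_ge0 pPU) | exact: LP_ge0 | exact: ltW (le_lt_trans LP_ge0 LPU)].
Qed.

Lemma Cf_ge0 y : inY m y -> 0 <= Cf y.
Proof.
move=> hy; apply: lin_ge0 => // i; apply: mulr_ge0; (try exact: ltW (deg_gt0 i)); first [exact: pP_ge0 | exact: ltW (le_lt_trans pP_ge0 pPU) | exact: LP_ge0 | exact: ltW (le_lt_trans LP_ge0 LPU)].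
Qed.

Lemma dd_ge0 (i : 'I_n) : 0 <= deg R i * (deg R i - 1).
Proof. by apply: mulr_ge0; [exact: ltW (deg_gt0 i) | rewrite subr_ge0 dg_ge1]. Qed.

Lemma Bf_ge0 y : inY m y -> 0 <= Bf y.
Proof.
move=> hy; apply: lin_ge0 => // i; apply: mulr_ge0; (try exact: dd_ge0); first [exact: pP_ge0 | exact: ltW (le_lt_trans pP_ge0 pPU) | exact: LP_ge0 | exact: ltW (le_lt_trans LP_ge0 LPU)].
Qed.

Lemma key1 (P1 P2 P3 Q1 Q2 Q3 : R) : 0 <= P3 -> P3 < (P1 + P2) / 2 -> 0 <= P2 ->
  P2 <= P1 -> 1 <= Q3 -> Q3 <= (Q1 + Q2) / 2 -> Q2 <= Q1 ->
  P3 * Q3 < (P1 * Q1 + P2 * Q2) / 2.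
Proof.
move=> h1 h2 h3 h4 h5 h6 h7.
have e1 : P3 * Q3 < (P1 + P2) / 2 * Q3 by rewrite ltr_pM2r //; lra.
have e2 : (P1 + P2) / 2 * Q3 <= (P1 + P2) / 2 * ((Q1 + Q2) / 2).
  by rewrite ler_wpM2l //; lra.
have e3 : 0 <= (P1 - P2) * (Q1 - Q2) by apply: mulr_ge0; lra.
nra.
Qed.

Lemma key2 (G G' C C' Q Q' : R) : 0 <= G' -> 0 <= C' -> G' < G -> C' < C ->
  1 <= Q' -> Q' <= Q -> G' * C' * Q' < G * C * Q.
Proof.
move=> h1 h2 h3 h4 h5 h6.
have e1 : G' * C' < G * C by nra.
have e2 : G' * C' * Q' <= G' * C' * Q by rewrite ler_wpM2l // mulr_ge0.
have e3 : G' * C' * Q < G * C * Q by rewrite ltr_pM2r //; lra.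
lra.
Qed.

Lemma inY_mid y1 y2 : inY m y1 -> inY m y2 -> inY m (mid y1 y2).
Proof.
move=> h1 h2 i; have /andP[a b] := h1 i; have /andP[c d] := h2 i.
rewrite /mid; apply/andP; split; lra.
Qed.

Lemma mid_lt y1 y2 k : inY m y1 -> inY m y2 -> (forall i, y1 i <= y2 i) ->
  y1 k < y2 k -> SCrep (mid y1 y2) < (SCrep y1 + SCrep y2) / 2.
Proof.
move=> h1 h2 hle hk.
have h3 := inY_mid h1 h2.
have G21 : Gf y2 < Gf y1.
  apply: (@lin_lt _ _ _ _ _ _ _ k) => // i; by rewrite ltr_pM2l ?deg_gt0.
have C21 : Cf y2 < Cf y1.
  apply: (@lin_lt _ _ _ _ _ _ _ k) => // i; by rewrite ltr_pM2l ?deg_gt0.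
have B21 : Bf y2 <= Bf y1.
  apply: lin_le => // i; by rewrite ler_wpM2l ?dd_ge0 // ltW.
have G3 : Gf (mid y1 y2) = (Gf y1 + Gf y2) / 2 by rewrite /Gf lin_mid.
have C3 : Cf (mid y1 y2) = (Cf y1 + Cf y2) / 2 by rewrite /Cf lin_mid.
have B3 : Bf (mid y1 y2) = (Bf y1 + Bf y2) / 2 by rewrite /Bf lin_mid.
have L3 : Lf (mid y1 y2) = (Lf y1 + Lf y2) / 2 by rewrite /Lf lin_mid.
have g2 := Gf_ge0 h2; have c2 := Cf_ge0 h2; have b2 := Bf_ge0 h2.
have Q3 : Qf (Bf (mid y1 y2)) <= (Qf (Bf y1) + Qf (Bf y2)) / 2.
  by rewrite B3; apply: Q_mid => //; exact: le_trans B21.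
have Q21 : Qf (Bf y2) <= Qf (Bf y1) by apply: Q_mono.
have Q31 : 1 <= Qf (Bf (mid y1 y2)) by apply: Q_ge1; exact: Bf_ge0.
have P3 : Gf (mid y1 y2) * Cf (mid y1 y2) < (Gf y1 * Cf y1 + Gf y2 * Cf y2) / 2.
  rewrite G3 C3; nra.
have P3' : 0 <= Gf (mid y1 y2) * Cf (mid y1 y2) by rewrite mulr_ge0 // ?Gf_ge0 ?Cf_ge0.
have P21 : Gf y2 * Cf y2 <= Gf y1 * Cf y1 by rewrite ler_pM // ltW.
have K1 := key1 P3' P3 (mulr_ge0 g2 c2) P21 Q31 Q3 Q21.
have c0 : 0 < tau * beta / S by rewrite divr_gt0 ?mulr_gt0.
rewrite /SCrep L3.
have := ltr_pM2l c0; move=> /(_ _ _) hh.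
have K2 := K1; rewrite -(ltr_pM2l c0) in K2.
rewrite -!mulrA; lra.
Qed.

Definition exy (y : 'I_n -> R) (i j : 'I_n) := exch y i j (Num.min (y i) (m j - y j)).

Lemma exch_lt y (i j : 'I_n) : inY m y -> (i < j)%N -> 0 < y i -> y j < m j ->
  inY m (exy y i j) /\ SCrep (exy y i j) < SCrep y.
Proof.
move=> hy hij hi hj.
set e := Num.min (y i) (m j - y j).
have e0 : 0 < e by rewrite lt_min hi subr_gt0.
have e1 : e <= y i by rewrite ge_min lexx.
have e2 : e <= m j - y j by rewrite ge_min lexx orbT.
have nij : i != j by rewrite neq_ltn hij.
have dij : deg R i < deg R j by rewrite /deg ltr_nat.
have hy' : inY m (exy y i j).
  have nji : j != i by rewrite eq_sym.
  move=> k; rewrite /exy /exch -/e.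
  have [-> | kj] := eqVneq k j.
    rewrite (negbTE nji) mulr1n mulr0n subr0 mulr1.
    have /andP[a b] := hy j; apply/andP; split; lra.
  rewrite mulr0n.
  have [-> | ki] := eqVneq k i.
    rewrite mulr1n sub0r mulrN1; have /andP[a b] := hy i; apply/andP; split; lra.
  by rewrite subr0 mulr0 addr0; apply: hy.
split => //.
have L' : Lf (exy y i j) = Lf y.
  by apply/eqP; rewrite -subr_eq0 /Lf /exy lin_exch subrr mulr0.
have G' : Gf (exy y i j) < Gf y.
  rewrite -subr_lt0 /Gf /exy lin_exch -/e.
  have : 0 < (deg R j - deg R i) * (pU - pP) by rewrite mulr_gt0 // subr_gt0.
  nra.
have C' : Cf (exy y i j) < Cf y.
  rewrite -subr_lt0 /Cf /exy lin_exch -/e.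
  have : 0 < (deg R j - deg R i) * (LU - LP) by rewrite mulr_gt0 // subr_gt0.
  nra.
have B' : Bf (exy y i j) <= Bf y.
  rewrite -subr_le0 /Bf /exy lin_exch -/e.
  have h1 : 0 <= deg R j * (deg R j - 1) - deg R i * (deg R i - 1).
    have := dg_ge1 i; nra.
  have : 0 <= (deg R j * (deg R j - 1) - deg R i * (deg R i - 1)) * (pU - pP).
    by rewrite mulr_ge0 // subr_ge0 ltW.
  nra.
have Q' : Qf (Bf (exy y i j)) <= Qf (Bf y) by apply: Q_mono => //; exact: Bf_ge0.
have Q1 : 1 <= Qf (Bf (exy y i j)) by apply: Q_ge1; exact: Bf_ge0.
have K2 := key2 (Gf_ge0 hy') (Cf_ge0 hy') G' C' Q1 Q'.
have c0 : 0 < tau * beta / S by rewrite divr_gt0 ?mulr_gt0.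
rewrite /SCrep L' ltrD2l.
have h : 0 < tau * beta / S * (Gf y * Cf y * Qf (Bf y) - Gf (exy y i j) * Cf (exy y i j) * Qf (Bf (exy y i j))).
  by apply: mulr_gt0 => //; rewrite subr_gt0.
rewrite -subr_gt0; move: h; set A := tau * beta / S; move=> h.
suff -> : A * (Gf y * Cf y) * Qf (Bf y) - A * (Gf (exy y i j) * Cf (exy y i j)) * Qf (Bf (exy y i j)) =
  A * (Gf y * Cf y * Qf (Bf y) - Gf (exy y i j) * Cf (exy y i j) * Qf (Bf (exy y i j))) by [].
ring.
Qed.



Definition isMin (y : 'I_n -> R) :=
  inY m y /\ forall y', inY m y' -> SCrep y <= SCrep y'.

Definition thr (y : 'I_n -> R) :=
  forall i j : 'I_n, (i < j)%N -> 0 < y i -> y j = m j.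

Lemma min_thr y : isMin y -> thr y.
Proof.
move=> [hy hm] i j hij hi; apply/eqP; rewrite eq_le; have /andP[_ ->] := hy j.
rewrite /= leNgt; apply/negP => hj; have [h1 h2] := exch_lt hy hij hi hj.
by have := hm _ h1; rewrite leNgt h2.
Qed.

Lemma thr_cmp y1 y2 : inY m y1 -> inY m y2 -> thr y1 -> thr y2 ->
  (forall k, y1 k <= y2 k) \/ (forall k, y2 k <= y1 k).
Proof.
move=> h1 h2 t1 t2.
case: (boolP [forall k, y1 k <= y2 k]) => [/forallP H|/forallPn [i Hi]]; first by left.
right => k; rewrite -ltNge in Hi.
rewrite leNgt; apply/negP => Hk.
have /andP[a1 b1] := h1 i; have /andP[a2 b2] := h2 i.
have /andP[c1 d1] := h1 k; have /andP[c2 d2] := h2 k.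
case: (ltngtP i k) => [ik|ki|ik].
- have e := t1 i k ik (le_lt_trans a2 Hi).
  by move: Hk; rewrite e ltNge d2.
- have e := t2 k i ki (le_lt_trans c1 Hk).
  by move: Hi; rewrite e ltNge b1.
- have ik' : i = k by apply: val_inj.
  by move: Hk; rewrite -ik' ltNge (ltW Hi).
Qed.

Lemma min_eq y1 y2 : isMin y1 -> isMin y2 -> (forall k, y1 k <= y2 k) -> y1 = y2.
Proof.
move=> [h1 m1] [h2 m2] hle; apply: funext => k; apply/eqP; rewrite eq_le hle /=.
rewrite leNgt; apply/negP => hk.
have := mid_lt h1 h2 hle hk.
have := m1 _ (inY_mid h1 h2); have := m1 _ h2; have := m2 _ h1.
lra.
Qed.

Lemma unique_min y1 y2 : isMin y1 -> isMin y2 -> y1 = y2.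
Proof.
move=> h1 h2.
have [H|H] := thr_cmp h1.1 h2.1 (min_thr h1) (min_thr h2).
  exact: min_eq.
by apply/esym; exact: min_eq.
Qed.
End Main.

Section Cont2.
Local Open Scope classical_set_scope.
Variable R : realType.
Variable n : nat.
Variable m : 'I_n -> R.
Variables (tau LP LU pP pU beta cP : R) (K : nat).

Lemma cont_SCrep : continuous (fun v : 'rV[R]_n =>
  SCrep m tau LP LU pP pU beta cP K (fun i => v ord0 i)).
Proof.
have hQ : continuous (fun w : 'rV[R]_n => Qf m beta K (Bf m pP pU (fun i => w ord0 i))).
  rewrite /Qf; apply: (@continuous_big _ _ +%R 0 xpredT add_continuous) => k _ w.
  rewrite /Bf; apply: cvg_powk.
  exact: (cvgM (cvgM (cvg_cst _) (@cont_lin R n m _ _ w)) (cvg_cst _)).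
move=> v; rewrite /SCrep /Lf /Gf /Cf.
exact: (cvgD (@cont_lin R n m _ _ v) (cvgM (cvgM (cvg_cst _) (cvgM (@cont_lin R n m _ _ v) (@cont_lin R n m _ _ v))) (hQ v))).
Qed.
End Cont2.

Section Ex.
Local Open Scope classical_set_scope.
Variable R : realType.
Variable n : nat.

Lemma exists_min (m : 'I_n -> R) (f : 'rV[R]_n -> R) :
  (forall i, 0 <= m i) -> continuous f ->
  exists y : 'I_n -> R, inY m y /\ forall y', inY m y' -> f (\row_i y i) <= f (\row_i y' i).
Proof.
move=> m0 cf.
have cA : compact [set v : 'rV[R]_n | forall i, `[0, m i]%classic (v ord0 i)].
  apply: (@rV_compact _ n (fun i => `[0, m i]%classic)) => i; exact: segment_compact.
have A0 : ([set v : 'rV[R]_n | forall i, `[0, m i]%classic (v ord0 i)] !=set0)%classic.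
  by exists 0 => i /=; rewrite mxE in_itv /= lexx m0.
have [c /set_mem cA' cmin] := EVT_min_rV A0 cA (continuous_subspaceT cf).
exists (fun i => c ord0 i); split.
  by move=> i; have := cA' i; rewrite /= in_itv.
have -> : \row_i c ord0 i = c by apply/rowP => i; rewrite !mxE.
move=> y' Hy'; apply: cmin; rewrite inE => i /=; rewrite mxE in_itv; exact: Hy'.
Qed.
End Ex.

Unset Implicit Arguments.

Theorem theorem5 (R : realType) (Dmax : nat) (m : 'I_Dmax -> R)
  (tauDA LP LU pP pU betaIA cP cI xicov ded : R) (K : nat) :
  is_pop_size m ->
  0 < tauDA <= 1 ->
  0 <= LP -> LP < LU ->
  0 <= pP -> pP < pU -> pU <= 1 ->
  0 < betaIA <= 1 ->
  (0 < K)%N ->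
  0 <= cP -> 0 <= cI ->
  0 < xicov <= 1 -> 0 <= ded ->
  (* Assumption (A) *)
  LP < (1 - xicov) * LU -> cI + ded < cP ->
  exists! y : 'I_Dmax -> R,
    inY m y /\
    forall y' : 'I_Dmax -> R, inY m y' ->
      SC m tauDA LP LU pP pU betaIA cP K y <= SC m tauDA LP LU pP pU betaIA cP K y'.
Proof.
move=> [mpos msum] /andP[tau0 _] LP0 LPU pP0 pPU _ /andP[beta0 _] K0 _ _ _ _ _ _.
have Sg : 0 < S m.
  have h : 1 <= S m.
    rewrite -msum /S; apply: ler_sum => i _; have := dg_ge1 R i; have := mpos i; nra.
  exact: lt_le_trans ltr01 h.
have eqSC := SC_rep tauDA LP LU pP pU betaIA cP K mpos Sg.
have [y0 [hy0 hmin]] := @exists_min R Dmax m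
  (fun v => SCrep m tauDA LP LU pP pU betaIA cP K (fun i => v ord0 i))
  (fun i => ltW (mpos i)) (@cont_SCrep R Dmax m tauDA LP LU pP pU betaIA cP K).
have rowK (y : 'I_Dmax -> R) : (fun i => (\row_j y j) ord0 i) = y.
  by apply: funext => i; rewrite mxE.
have M0 : isMin m tauDA LP LU pP pU betaIA cP K y0.
  by split => // y' hy'; have := hmin y' hy'; rewrite /= !rowK.
exists y0; split.
  by split => // y' hy'; rewrite !eqSC; exact: M0.2.
move=> y' [hy' hm'].
apply: (unique_min tau0 LP0 LPU pP0 pPU beta0 K0 Sg M0).
by split => // y'' h''; rewrite -!eqSC; exact: hm'.
Qed.
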